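(* Let $(X,d)$ be a metric space and $\ell:X\to[0,+\infty]$ a lower semicontinuous function satisfying hypothesis $(H_0)$. Then there is a lower semicontinuous function $u:X\to\mathbb{R}\cup\{+\infty\}$ with $\inf_Xu=0$ and $G[u](x)=\ell(x)$ for all $x\in X$.
   Context: Global slope: for $u:X\to\mathbb{R}\cup\{+\infty\}$, $G[u](x)=\sup_{y\neq x}\frac{(u(x)-u(y))_+}{d(x,y)}$ if $u(x)<+\infty$ and $G[u](x)=+\infty$ otherwise ($\alpha_+=\max\{\alpha,0\}$). Hypothesis $(H_0)$: there is a sequence $\{\bar x_n\}_n\subset X$ with $\sum_{n=0}^\infty\ell(\bar x_n)d(\bar x_n,\bar x_{n+1})<+\infty$ and $\lim_{n\to\infty}\ell(\bar x_n)=0$. *)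

(* Defs.v *)
From HB Require Import structures.
From mathcomp Require Import all_boot all_order all_algebra.
From mathcomp Require Import all_classical all_reals all_analysis.
Set Implicit Arguments. Unset Strict Implicit. Unset Printing Implicit Defensive.
Import Order.TTheory GRing.Theory Num.Theory.
Local Open Scope classical_set_scope.
Local Open Scope ring_scope.

Definition is_metric (R : realType) (X : Type) (d : X -> X -> R) : Prop :=
  (forall x y, 0 <= d x y) /\
  (forall x y, d x y = 0 <-> x = y) /\
  (forall x y, d x y = d y x) /\
  (forall x y z, d x z <= d x y + d y z).

Definition lsc_metric (R : realType) (X : Type) (d : X -> X -> R)
  (f : X -> \bar R) : Prop :=
  forall x (t : R), (t%:E < f x)%E ->
    exists2 delta : R, 0 < delta & forall y, d x y < delta -> (t%:E < f y)%E.

(* global slope G[u](x) = sup_{y <> x} (u x - u y)_+ / d(x,y) if u x < +oo,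
   and +oo otherwise; the supremum of the (nonnegative) quotients is taken
   with the convention sup of the empty family = 0 (only relevant when X is
   a singleton), implemented by adjoining 0 to the set. *)
Definition global_slope (R : realType) (X : Type) (d : X -> X -> R)
  (u : X -> \bar R) (x : X) : \bar R :=
  if u x == +oo%E then +oo%E
  else ereal_sup ([set (maxe (u x - u y) 0 * ((d x y)^-1)%:E)%E | y in [set y | y <> x]]
                  `|` [set 0%E]).

Definition H0 (R : realType) (X : Type) (d : X -> X -> R) (l : X -> \bar R) : Prop :=
  exists xb : nat -> X,
    (\sum_(0 <= n <oo) (l (xb n) * (d (xb n) (xb n.+1))%:E) < +oo)%E /\
    (l \o xb @ \oo --> 0%E).

(* Main.v *)
Require Import Defs.
From HB Require Import structures.
From mathcomp Require Import all_boot all_order all_algebra.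
From mathcomp Require Import all_classical all_reals all_analysis.
From mathcomp Require Import ring lra.
Import Order.TTheory GRing.Theory Num.Theory.
Local Open Scope classical_set_scope.
Local Open Scope ring_scope.
Set Implicit Arguments. Unset Strict Implicit.

Definition cst (R : realType) (X : Type) (d : X -> X -> R) (l : X -> \bar R)
  (p : nat -> X) : \bar R :=
  (\sum_(0 <= i <oo) (l (p i) * (d (p i) (p i.+1))%:E))%E.

Lemma cst_ge0 (R : realType) (X : Type) (d : X -> X -> R) (l : X -> \bar R) p :
  (forall x y, 0 <= d x y) -> (forall x, (0 <= l x)%E) -> (0 <= cst d l p)%E.
Proof.
move=> d0 l0; apply: nneseries_ge0 => n _ _; apply: mule_ge0 => //.
by rewrite lee_fin.
Qed.

Lemma cst_cons (R : realType) (X : Type) (d : X -> X -> R) (l : X -> \bar R) p :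
  (forall x y, 0 <= d x y) -> (forall x, (0 <= l x)%E) ->
  cst d l p = (l (p 0%N) * (d (p 0%N) (p 1%N))%:E + cst d l (fun i => p i.+1))%E.
Proof.
move=> d0 l0; rewrite /cst nneseries_recl //; last first.
  by move=> k _; apply: mule_ge0 => //; rewrite lee_fin.
congr (_ + _)%E; rewrite -nneseries_addn; last first.
  by move=> k; apply: mule_ge0 => //; rewrite lee_fin.
by apply: eq_eseriesr => i _; rewrite addn1.
Qed.

Definition sh (X : Type) (j : nat) (p : nat -> X) := fun i => p (i + j)%N.

Lemma cst_sh (R : realType) (X : Type) (d : X -> X -> R) (l : X -> \bar R) p j :
  (forall x y, 0 <= d x y) -> (forall x, (0 <= l x)%E) ->
  cst d l (sh j p) = (l (p j) * (d (p j) (p j.+1))%:E + cst d l (sh j.+1 p))%E.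
Proof.
move=> d0 l0; rewrite cst_cons //; congr (_ + _)%E.
congr (cst d l _); apply: funext => i; by rewrite /sh addSnnS.
Qed.

Lemma adm_sh (R : realType) (X : Type) (l : X -> \bar R) p j :
  (l \o p @ \oo --> 0%E) -> (l \o sh j p @ \oo --> 0%E).
Proof. by move=> h; rewrite -(cvg_shiftn j) in h. Qed.

Lemma adm_cons (R : realType) (X : Type) (l : X -> \bar R) q x :
  (l \o q @ \oo --> 0%E) ->
  (l \o (fun i => if i is j.+1 then q j else x) @ \oo --> 0%E).
Proof. by move=> h; rewrite -cvg_shiftS. Qed.

Lemma exit_lem (R : realType) (X : Type) (d : X -> X -> R) (l : X -> \bar R) p (t : R) j :
  is_metric d -> (forall x, (0 <= l x)%E) -> 0 <= t ->
  (forall i, (i < j)%N -> (t%:E <= l (p i))%E) ->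
  ((t * d (p 0%N) (p j))%:E + cst d l (sh j p) <= cst d l p)%E.
Proof.
move=> [d0 [dxx [dsym dtri]]] l0 t0; elim: j => [|j IH] H.
  have -> : sh 0 p = p by apply: funext => i; rewrite /sh addn0.
  by have := (dxx (p 0%N) (p 0%N)).2 erefl => ->; rewrite mulr0 add0e.
apply: le_trans (IH (fun i hi => H i (ltnW hi))).
rewrite [cst d l (sh j p)]cst_sh // addeA; apply: leeD2r.
have h1 : ((t * d (p 0%N) (p j.+1))%:E <= (t * d (p 0%N) (p j))%:E + (t * d (p j) (p j.+1))%:E)%E.
  by rewrite -EFinD lee_fin -mulrDr ler_wpM2l.
apply: le_trans h1 _.
rewrite leeD2l // EFinM lee_wpmul2r ?lee_fin //.
exact: H.
Qed.

Definition Vf (R : realType) (X : Type) (d : X -> X -> R) (l : X -> \bar R) x (e : R) :=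
  ereal_inf [set cst d l p | p in [set p | d x (p 0%N) < e /\ (l \o p @ \oo --> 0%E)]].

Definition Uf (R : realType) (X : Type) (d : X -> X -> R) (l : X -> \bar R) x :=
  ereal_sup [set Vf d l x e | e in [set e : R | 0 < e]].

Lemma V_ge0 (R : realType) (X : Type) (d : X -> X -> R) (l : X -> \bar R) x e :
  (forall x y, 0 <= d x y) -> (forall x, (0 <= l x)%E) -> (0 <= Vf d l x e)%E.
Proof.
move=> d0 l0; apply: le_ereal_inf_tmp => _ [p _ <-]; exact: cst_ge0.
Qed.

Lemma U_ge0 (R : realType) (X : Type) (d : X -> X -> R) (l : X -> \bar R) x :
  (forall x y, 0 <= d x y) -> (forall x, (0 <= l x)%E) -> (0 <= Uf d l x)%E.
Proof.
move=> d0 l0; apply: le_trans (V_ge0 x 1 d0 l0) _.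
apply: ereal_sup_ubound; exists 1 => //=.
Qed.

Lemma U_le_cst (R : realType) (X : Type) (d : X -> X -> R) (l : X -> \bar R) x p :
  is_metric d -> p 0%N = x -> (l \o p @ \oo --> 0%E) -> (Uf d l x <= cst d l p)%E.
Proof.
move=> [d0 [dxx _]] p0 lp; apply: ge_ereal_sup => _ [e /= e0 <-].
apply: ereal_inf_lbound; exists p => //; split => //.
by rewrite p0 ((dxx x x).2 erefl).
Qed.

Lemma V_le_U (R : realType) (X : Type) (d : X -> X -> R) (l : X -> \bar R) x e :
  0 < e -> (Vf d l x e <= Uf d l x)%E.
Proof. by move=> e0; apply: ereal_sup_ubound; exists e. Qed.

Lemma U_le (R : realType) (X : Type) (d : X -> X -> R) (l : X -> \bar R) x y (r : R) :
  is_metric d -> (forall x, (0 <= l x)%E) -> l x = r%:E ->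
  (Uf d l x <= (r * d x y)%:E + Uf d l y)%E.
Proof.
move=> dm l0 lx; have [d0 [dxx [dsym dtri]]] := dm.
have r0 : 0 <= r by rewrite -lee_fin -lx.
apply: ge_ereal_sup => _ [e /= e0 <-].
apply/lee_addgt0Pr => eta eta0.
pose dl := eta / (r + 1).
have dl0 : 0 < dl by rewrite divr_gt0 // ltr_wpDl.
have rdl : r * dl <= eta.
  rewrite /dl mulrA ler_pdivrMr ?ltr_wpDl //.
  by rewrite mulrDr mulr1 mulrC lerDl ltW.
have h : (Vf d l x e <= (r * (d x y + dl))%:E + Vf d l y dl)%E.
  rewrite -leeBlDl //; apply: le_ereal_inf_tmp => _ [q [q0 lq] <-].
  rewrite leeBlDl //.
  have -> : cst d l q = cst d l (fun i => (fun k => if k is j.+1 then q j else x) i.+1) by [].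
  apply: le_trans (_ : (cst d l (fun k => if k is j.+1 then q j else x) <= _)%E).
    apply: ereal_inf_lbound; exists (fun k => if k is j.+1 then q j else x) => //.
    split; first by rewrite /= ((dxx x x).2 erefl).
    exact: adm_cons.
  rewrite cst_cons // lx /= leeD2r // -EFinM lee_fin ler_wpM2l //.
  by apply: le_trans (dtri x y (q 0%N)) _; rewrite lerD2l ltW.
apply: le_trans h _.
rewrite mulrDr EFinD -!addeA; apply: leeD2l.
rewrite addeC; apply: leeD; first exact: V_le_U.
by rewrite lee_fin.
Qed.

Lemma U_lsc (R : realType) (X : Type) (d : X -> X -> R) (l : X -> \bar R) :
  is_metric d -> lsc_metric d (Uf d l).
Proof.
move=> [d0 [dxx [dsym dtri]]] x t /ereal_sup_gt [_ [e /= e0 <-] te].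
exists (e / 2); first by rewrite divr_gt0.
move=> z hz; apply: lt_le_trans te _.
have e20 : 0 < e / 2 by rewrite divr_gt0.
apply: le_trans _ (@V_le_U _ _ d l z _ e20).
apply: le_ereal_inf_tmp => _ [p [hp lp] <-]; apply: ereal_inf_lbound.
exists p => //; split => //.
apply: le_lt_trans (dtri x z (p 0%N)) _.
by rewrite [e](splitr e) ltrD.
Qed.

Lemma U_inf (R : realType) (X : Type) (d : X -> X -> R) (l : X -> \bar R) :
  is_metric d -> (forall x, (0 <= l x)%E) -> H0 d l ->
  ereal_inf (range (Uf d l)) = 0%E.
Proof.
move=> dm l0 [xb [sfin lxb]]; have [d0 _] := dm.
apply/eqP; rewrite eq_le; apply/andP; split; last first.
  by apply: le_ereal_inf_tmp => _ [x _ <-]; exact: U_ge0.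
have f0 : forall k, (0 <= l (xb k) * (d (xb k) (xb k.+1))%:E)%E.
  by move=> k; apply: mule_ge0 => //; rewrite lee_fin.
have := nneseries_tail_cvg sfin (fun k _ => f0 k).
apply: cvge_ge; apply: nearW => N.
apply: le_trans (_ : (Uf d l (xb N) <= _)%E).
  by apply: ereal_inf_lbound; exists (xb N).
rewrite -nneseries_addn //.
apply: (le_trans (U_le_cst dm (p := sh N xb) _ _)).
- by rewrite /sh add0n.
- by apply: adm_sh.
rewrite /cst (@eq_eseriesr _ _ (fun i => l (xb (i + N)%N) * (d (xb (i + N)%N) (xb (i + N).+1))%:E)%E) //.
Qed.

Lemma slope_big (R : realType) (X : Type) (d : X -> X -> R) (l : X -> \bar R) x (v t eps : R) :
  is_metric d -> (forall x, (0 <= l x)%E) -> lsc_metric d l ->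
  Uf d l x = v%:E -> 0 < t -> (t%:E < l x)%E -> 0 < eps ->
  exists y, y <> x /\ exists w, Uf d l y = w%:E /\ t - eps < (v - w) / d x y.
Proof.
move=> dm l0 llsc Ux t0 tl eps0; have [d0 [dxx [dsym dtri]]] := dm.
have [del del0 hdel] := llsc x t tl.
pose eta := eps * del / (2 * t).
pose eta' := eps * del / 2.
have eta0 : 0 < eta by rewrite divr_gt0 ?mulr_gt0.
have eta'0 : 0 < eta' by rewrite divr_gt0 ?mulr_gt0.
have teta : t * eta = eps * del / 2.
  by rewrite /eta; field; rewrite ?gt_eqF.
have : (Vf d l x eta < (v + eta')%:E)%E.
  apply: le_lt_trans (@V_le_U _ _ d l x _ eta0) _; rewrite Ux lte_fin ltrDl //.
move=> /ereal_inf_lt [_ [p [hp0 lp] <-] hcp].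
have [N hN] : exists N, (l (p N) < t%:E)%E.
  apply: contrapT => hn.
  have : (t%:E <= 0)%E.
    apply: cvge_ge lp; apply: nearW => n /=.
    by rewrite leNgt; apply/negP => hlt; apply: hn; exists n.
  by rewrite lee_fin leNgt t0.
have exP : exists n, (del <= d x (p n)).
  exists N; rewrite leNgt; apply/negP => /hdel hl.
  by move: (lt_trans hl hN); rewrite ltxx.
case: (ex_minnP exP) => j Pj minj.
have hi : forall i, (i < j)%N -> (t%:E <= l (p i))%E.
  move=> i ij; apply/ltW/hdel; rewrite ltNge; apply/negP => /minj.
  by rewrite leqNgt ij.
have hex := @exit_lem _ _ d l p t j dm l0 (ltW t0) hi.
have hU := @U_le_cst _ _ d l (p j) (sh j p) dm (erefl _) (adm_sh j lp).
have hU0 := @U_ge0 _ _ d l (p j) d0 l0.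
have hlt := le_lt_trans (le_trans (leeD2l _ hU) hex) hcp.
move: hU0 hlt; case E: (Uf d l (p j)) => [w| |] //= hw0.
rewrite -EFinD lte_fin => hlt.
have pjx : p j <> x.
  move=> pjx; move: Pj; rewrite pjx ((dxx x x).2 erefl) => h.
  by move: (lt_le_trans del0 h); rewrite ltxx.
exists (p j); split => //; exists w; split => //.
have D0 : 0 < d x (p j) := lt_le_trans del0 Pj.
rewrite ltr_pdivlMr //.
have h2 := dtri x (p 0%N) (p j).
have h3 : t * d x (p j) <= t * d x (p 0%N) + t * d (p 0%N) (p j).
  by rewrite -mulrDr ler_wpM2l // ltW.
have h4 : t * d x (p 0%N) <= t * eta by rewrite ler_wpM2l ?ltW.
have h5 : eps * del <= eps * d x (p j) by apply: ler_wpM2l; [exact: ltW | exact: Pj].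
rewrite /eta' in hlt.
lra.
Qed.

Lemma between (R : realType) (s : R) (e : \bar R) : (s%:E < e)%E ->
  exists t : R, s < t /\ (t%:E < e)%E.
Proof.
case: e => [r| |] //=.
  rewrite lte_fin => sr; exists ((s + r) / 2); split; first lra.
  rewrite lte_fin; lra.
by move=> _; exists (s + 1); split; [lra | exact: ltry].
Qed.

Unset Implicit Arguments.
Set Strict Implicit.

Theorem proposition6p9 (R : realType) (X : Type) (d : X -> X -> R)
  (l : X -> \bar R) :
  is_metric d ->
  (forall x, (0 <= l x)%E) ->
  lsc_metric d l ->
  H0 d l ->
  exists u : X -> \bar R,
    [/\ (forall x, u x <> -oo%E),
        lsc_metric d u,
        ereal_inf (range u) = 0%E &
        (forall x, global_slope d u x = l x)].
Proof.
move=> dm l0 llsc h0; have [d0 [dxx [dsym dtri]]] := dm.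
exists (Uf d l); split.
- move=> x hx; have := @U_ge0 _ _ d l x d0 l0; rewrite hx //.
- exact: U_lsc.
- exact: U_inf.
move=> x; rewrite /global_slope.
have [xb [sfin lxb]] := h0.
have Ufin : forall r, l x = r%:E -> (Uf d l x < +oo)%E.
  move=> r lx; apply: le_lt_trans (U_le (xb 0%N) dm l0 lx) _.
  apply: le_lt_trans (leeD2l _ (@U_le_cst _ _ d l (xb 0%N) xb dm erefl lxb)) _.
  by rewrite ltey_eq fin_numD /= ge0_fin_numE ?sfin // (@cst_ge0 _ _ d l xb d0 l0).
case: eqP => Ux.
  case E: (l x) => [r| |] //.
  - by move: (Ufin r E); rewrite Ux ltxx.
  - by move: (l0 x); rewrite E.
have := @U_ge0 _ _ d l x d0 l0.
case Uxv: (Uf d l x) => [v| |] // v0.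
apply/eqP; rewrite eq_le; apply/andP; split.
- case E: (l x) => [r| |]; last first.
  + by move: (l0 x); rewrite E.
  + by rewrite leey.
  apply: ge_ereal_sup => z [[y yx <-] | ->]; last by rewrite -E l0.
  have dxy0 : 0 < d x y.
    rewrite lt_neqAle d0 andbT; apply/eqP => h; apply: yx.
    by apply/esym; apply: (dxx x y).1; rewrite -h.
  have hle := U_le y dm l0 E.
  rewrite Uxv in hle.
  have := @U_ge0 _ _ d l y d0 l0.
  case Uy: (Uf d l y) => [w| |] // w0; last first.
    by rewrite /= maxNye mul0e -E l0.
  rewrite -EFinB -EFin_max -EFinM lee_fin ler_pdivrMr //.
  rewrite ge_max; apply/andP; split; last by rewrite mulr_ge0 // -lee_fin -E l0.
  by rewrite Uy in hle; rewrite lerBlDr -lee_fin EFinD.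
- set S := (_ `|` _).
  have s0 : (0 <= ereal_sup S)%E by apply: ereal_sup_ubound; right.
  rewrite leNgt; apply/negP => hs.
  move: s0 hs; case Es: (ereal_sup S) => [sg| |] // sg0 hs; last by move: hs; rewrite ltNge leey.
  have [t [sgt tl]] := between hs.
  rewrite lee_fin in sg0.
  have t0 : 0 < t by apply: le_lt_trans sg0 sgt.
  have eps0 : 0 < (t - sg) / 2 by rewrite divr_gt0 // subr_gt0.
  have [y [yx [w [Uy hw]]]] := slope_big dm l0 llsc Uxv t0 tl eps0.
  have hel : (maxe (v%:E - Uf d l y) 0 * ((d x y)^-1)%:E <= ereal_sup S)%E.
    by apply: ereal_sup_ubound; left; exists y.
  rewrite Uy Es -EFinB -EFin_max -EFinM lee_fin in hel.
  have dxy0 : 0 < d x y.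
    rewrite lt_neqAle d0 andbT; apply/eqP => h; apply: yx.
    by apply/esym; apply: (dxx x y).1; rewrite -h.
  have h1 : (v - w) / d x y <= Num.max (v - w) 0 / d x y.
    by apply: ler_wpM2r; [rewrite invr_ge0 ltW | rewrite le_max lexx].
  clear -hw hel h1 sgt; lra.
Qed.
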